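(* Let $F_n$ be a probability distribution function on $\mathbb{R}$ satisfying $F_n(x+t)-F_n(x)\le Mt$ for all $x\ge0$, $t>0$, for some constant $M<\infty$. Let $y_n^*\ge0$, and define $q_n=F_n(y_n^* )-F_n(0)$ and $L_n=\int_0^{y_n^*}x(y_n^*-x)\,dF_n(x)$. Then $$L_n\ge\frac{q_n^3}{27M^2}.$$ *)

(* Defs.v *)
From HB Require Import structures.
From mathcomp Require Import all_boot all_order all_algebra.
From mathcomp Require Import all_classical all_reals all_analysis.
Set Implicit Arguments. Unset Strict Implicit. Unset Printing Implicit Defensive.
Import Order.TTheory GRing.Theory Num.Theory.
Import numFieldNormedType.Exports.
Local Open Scope classical_set_scope.
Local Open Scope ring_scope.

(* A probability distribution function on R: nondecreasing, right-continuous,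
   with limits 0 at -oo and 1 at +oo (mathcomp-analysis cumulativeBounded 0 1).
   dF is the associated Lebesgue-Stieltjes measure. *)
Definition L_n {R : realType} (F : cumulativeBounded (0:R) (1:R)) (y : R) : \bar R :=
  (\int[lebesgue_stieltjes_measure F]_(x in `[0%R, y]%classic) (x * (y - x))%:E)%E.

(* Main.v *)
Require Import Defs.
From HB Require Import structures.
From mathcomp Require Import all_boot all_order all_algebra.
From mathcomp Require Import all_classical all_reals all_analysis.
From mathcomp Require Import measurable_realfun.
From mathcomp Require Import ring lra.
Import Order.TTheory GRing.Theory Num.Theory.
Local Open Scope classical_set_scope.
Local Open Scope ring_scope.

Lemma ls_oc (R : realType) (F : cumulativeBounded (0:R) (1:R)) (a b : R) :
  a <= b -> lebesgue_stieltjes_measure F `]a, b]%classic = (F b - F a)%:E.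
Proof.
move=> ab; rewrite /lebesgue_stieltjes_measure /measure_extension measurable_mu_extE/=; last exact: is_ocitv.
by rewrite wlength_itv_bnd.
Qed.

Theorem lemma9 (R : realType) (F : cumulativeBounded (0:R) (1:R)) (M : R)
  (HM : forall x t : R, 0 <= x -> 0 < t -> F (x + t) - F x <= M * t)
  (y : R) (hy : 0 <= y) :
  let q := F y - F 0 in
  ((q ^+ 3 / (27 * M ^+ 2))%:E <= L_n F y)%E.
Proof.
change ((((F y - F 0) ^+ 3 / (27 * M ^+ 2))%:E <= L_n F y)%E); set q := F y - F 0.
set mu := lebesgue_stieltjes_measure F.
have mfun : forall D : set (measurableTypeR R), measurable_fun D (fun x : measurableTypeR R => (x * (y - x))%:E).
  move=> D; apply/measurable_EFinP; apply: measurable_funM => //.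
  apply: measurable_funB => //.
have L0 : (0 <= L_n F y)%E.
  by apply: integral_ge0 => x /=; rewrite in_itv/= => /andP[x0 xy]; rewrite lee_fin mulr_ge0// subr_ge0.
have [le0|gt0] := leP (q ^+ 3 / (27 * M ^+ 2)) 0.
  by rewrite (le_trans _ L0)// lee_fin.
have q0 : 0 <= q by rewrite subr_ge0; exact: (cumulative_is_nondecreasing F).
have [qe|qpos] := eqVneq q 0.
  by move: gt0; rewrite qe expr0n /= mul0r ltxx.
have {q0} qpos : 0 < q by rewrite lt_neqAle eq_sym qpos q0.
have [y0|yne] := eqVneq y 0.
  by move: qpos; rewrite /q y0 subrr ltxx.
have ypos : 0 < y by rewrite lt_neqAle eq_sym yne hy.
have hMy : q <= M * y by have := HM 0 y (lexx _) ypos; rewrite add0r.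
have Mpos : 0 < M by nra.
set d := q / (3 * M).
have dpos : 0 < d by rewrite divr_gt0 // mulr_gt0.
have qd : q = 3 * M * d by rewrite /d mulrC divfK // mulf_neq0 // gt_eqF.
have y3d : 3 * d <= y by nra.
have h1 : F d - F 0 <= M * d by have := HM 0 d (lexx _) dpos; rewrite add0r.
have h2 : F y - F (y - d) <= M * d.
  by have := HM (y - d) d ltac:(lra) dpos; rewrite subrK.
have -> : q ^+ 3 / (27 * M ^+ 2) = d ^+ 2 * (M * d).
  by rewrite qd; field; rewrite gt_eqF.
have sub : `]d, y - d]%classic `<=` `[0, y]%classic.
  by move=> x /=; rewrite !in_itv /= => /andP[? ?]; apply/andP; split; lra.
rewrite /L_n -/mu.
set A : set (measurableTypeR R) := `]d, y - d]%classic.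
have hmu : mu A = (F (y - d) - F d)%:E by apply: ls_oc; lra.
apply: (@le_trans _ _ (\int[mu]_(x in A) (cst (d ^+ 2)%:E) x)%E).
  rewrite integral_cst; last exact: measurable_itv.
  rewrite -[X in (_ * X)%E]/(mu A) hmu -EFinM lee_fin ler_pM2l ?exprn_gt0 //.
  have hq : F y - F 0 = 3 * (M * d) by rewrite mulrA -qd.
  lra.
apply: (@le_trans _ _ (\int[mu]_(x in A) ((x:R) * (y - x))%:E)%E).
  apply: ge0_le_integral => //=.
  - exact: measurable_itv.
  - by move=> x _; rewrite lee_fin sqr_ge0.
  - move=> x; rewrite /A /= in_itv /= => /andP[? ?]; rewrite lee_fin expr2; nra.
apply: ge0_subset_integral => //=.
- exact: measurable_itv.
- by move=> x; rewrite in_itv/= => /andP[x0 xy]; rewrite lee_fin mulr_ge0// subr_ge0.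
Qed.
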